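(* Let $K$ be a compact line, $Q\subseteq K$ and $(F_i)_{i\in I}$ a weak*-null family in $\mathrm{NBV}(K)$ which is of type $c_0\ell_1$ over $Q$. Then the set $\{t\in Q\cap(H\setminus H^+):(F_i(t))_{i\in I}\notin c_0(I)\}$ is countable for every closed separable subset $H$ of $K$, and moreover the set $\{t\in Q\cap H:(F_i(t))_{i\in I}\notin c_0(I)\}$ is countable for every closed separable convex subset $H$ of $K$.
   Context: A compact line is a totally ordered set which is compact in its order topology; a closed subset $H$ is a compact line with the induced order, and $H^+$ denotes its right-isolated points ($\max H$ or points having an immediate successor in $H$). A subset $H$ is convex if $t\le s$ in $H$ implies $[t,s]\subseteq H$. $\mathrm{NBV}(K)$ is the space of right-continuous real maps of bounded variation on $K$, identified with $C(K)^*$ via $F_\mu(t)=\mu([\min K,t])$. $\lim_{i\in I}a_i=0$ means $\{i:|a_i|\ge\varepsilon\}$ is finite for every $\varepsilon>0$; $c_0(I)$ is the set of such families. $(F_i)$ is weak*-null if $\lim_{i\in I}\int f\,d\mu_i=0$ for every $f\in C(K)$, $\mu_i$ associated to $F_i$. $(F_i)$ is of type $c_0\ell_1$ over $Q$ if $F_i(t)=a_{i,t}+b_{i,t}$ ($i\in I,t\in Q$) with $\lim_{i\in I}a_{i,t}=0$ for each $t\in Q$ and $\sup_i\sum_{t\in Q}|b_{i,t}|<\infty$. *)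

(* Defs.v *)
From HB Require Import structures.
From mathcomp Require Import all_boot all_order all_algebra.
From mathcomp Require Import all_classical all_reals all_analysis.

Set Implicit Arguments.
Unset Strict Implicit.
Unset Printing Implicit Defensive.

Import Order.TTheory GRing.Theory Num.Theory numFieldNormedType.Exports.
Local Open Scope classical_set_scope.
Local Open Scope ring_scope.

(* The carrier K of a line, pointed by some element k0 (a compact line has a
   minimum min K, used in the definition of F_mu, hence is nonempty).
   [pointed K k0] is just K, equipped with the pointed structure given by k0;
   this is only needed to build the Borel measurable space below. *)
Definition pointed {d : Order.disp_t} (K : orderTopologicalType d) (k0 : K) : Type := K.
HB.instance Definition _ {d : Order.disp_t} (K : orderTopologicalType d) (k0 : K) :=
  Choice.on (pointed k0).
HB.instance Definition _ {d : Order.disp_t} (K : orderTopologicalType d) (k0 : K) :=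
  isPointed.Build (pointed k0) k0.

Section compact_lines.
Context {d : Order.disp_t} (K : orderTopologicalType d).

Definition compact_line := compact [set: K].

Definition Borel (k0 : K) := g_sigma_algebraType (@open K : set (set (pointed k0))).

Definition separable_set (H : set K) :=
  exists D : set K, [/\ D `<=` H, countable D & H `<=` closure D].

Definition order_convex (H : set K) :=
  forall t s u : K, H t -> H s -> (t <= u <= s)%O -> H u.

(* t belongs to H^+ : t = max H, or t has an immediate successor in H *)
Definition right_isolated (H : set K) (t : K) :=
  H t /\
  ((forall s, H s -> (s <= t)%O) \/
   exists s, [/\ H s, (t < s)%O & forall u, H u -> ~ (t < u < s)%O]).

End compact_lines.

Section families.
Context {R : realType}.

Definition c0fam (I : Type) (a : I -> R) :=
  forall e : R, 0 < e -> finite_set [set i | e <= `|a i|].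

Definition finite_radon {d : Order.disp_t} {K : orderTopologicalType d} {k0 : K}
    (mu : {measure set (Borel k0) -> \bar R}) :=
  (mu setT < +oo)%E /\
  forall A : set (Borel k0), measurable A ->
    forall e : R, 0 < e ->
      exists C : set K, [/\ compact C, C `<=` A & (mu A <= mu C + e%:E)%E].

(* A regular finite signed Borel measure mu = mup - mun (difference of two
   finite Radon measures), and its distribution function
   F_mu(t) = mu([min K, t]) = mu({s | s <= t}). *)
Definition Fmu {d : Order.disp_t} {K : orderTopologicalType d} {k0 : K}
    (mup mun : {measure set (Borel k0) -> \bar R}) (t : K) : R :=
  fine (mup [set s : Borel k0 | ((s : K) <= t)%O]) - fine (mun [set s : Borel k0 | ((s : K) <= t)%O]).

Definition int_signed {d : Order.disp_t} {K : orderTopologicalType d} {k0 : K}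
    (mup mun : {measure set (Borel k0) -> \bar R}) (f : K -> R) : R :=
  Rintegral mup setT f - Rintegral mun setT f.

Definition weak_star_null {d : Order.disp_t} {K : orderTopologicalType d} {k0 : K}
    (I : Type) (mup mun : I -> {measure set (Borel k0) -> \bar R}) :=
  forall f : K -> R, continuous f -> c0fam (fun i => int_signed (mup i) (mun i) f).

Definition type_c0l1 {K : choiceType} (I : Type) (F : I -> K -> R) (Q : set K) :=
  exists (a b : I -> K -> R),
    [/\ forall i t, Q t -> F i t = a i t + b i t,
        forall t, Q t -> c0fam (fun i => a i t)
      & exists M : R, forall i, (\esum_(t in Q) (`|b i t|)%:E <= M%:E)%E].

End families.

(* Main.v *)
Require Import Defs.
From HB Require Import structures.
From mathcomp Require Import all_boot all_order all_algebra.
From mathcomp Require Import finmap.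
From mathcomp Require Import all_classical all_reals all_analysis.
From mathcomp Require Import measurable_realfun lra.
Import Order.TTheory GRing.Theory Num.Theory numFieldNormedType.Exports.
Local Open Scope classical_set_scope.
Local Open Scope ring_scope.
Section L.
Context {d : Order.disp_t} (K : orderTopologicalType d) (k0 : K) (R : realType).

Lemma open_mB (A : set K) : open A -> measurable (A : set (Borel k0)).
Proof. by move=> oA; apply: sub_sigma_algebra. Qed.

Lemma closed_mB (A : set K) : closed A -> measurable (A : set (Borel k0)).
Proof.
move=> cA; rewrite -[A]setCK; apply: measurableC; apply: open_mB.
exact: closed_openC.
Qed.

Lemma cont_mB {f : K -> R} : continuous f -> measurable_fun [set: Borel k0] (f : Borel k0 -> R).
Proof.
move=> /continuousP cf.
apply: (measurability _ (measurable_realfun.RGenOpens.measurableE R)).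
move=> _ [_ [a [b ->] <-]]; rewrite setTI; apply: open_mB; apply: cf.
exact: interval_open.
Qed.

Lemma closed_le (a : K) : closed [set x : K | (x <= a)%O].
Proof.
have -> : [set x : K | (x <= a)%O] = `]-oo, a]%classic by apply/seteqP; split => x; rewrite /= in_itv.
exact: lray_closed.
Qed.

Lemma open_lt (a : K) : open [set x : K | (a < x)%O].
Proof.
have -> : [set x : K | (a < x)%O] = `]a, +oo[%classic by apply/seteqP; split => x; rewrite /= in_itv /= andbT.
exact: rray_open.
Qed.

Lemma open_gt (a : K) : open [set x : K | (x < a)%O].
Proof.
have -> : [set x : K | (x < a)%O] = `]-oo, a[%classic by apply/seteqP; split => x; rewrite /= in_itv.
exact: lray_open.
Qed.

Lemma closed_ge (a : K) : closed [set x : K | (a <= x)%O].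
Proof.
have -> : [set x : K | (a <= x)%O] = `[a, +oo[%classic by apply/seteqP; split => x; rewrite /= in_itv /= andbT.
exact: rray_closed.
Qed.

Definition Pm (mu : {measure set (Borel k0) -> \bar R}) (a : K) : R :=
  fine (mu [set s : Borel k0 | ((s : K) <= a)%O]).

Lemma int_bounds (mu : {measure set (Borel k0) -> \bar R}) (f : K -> R) (a b : K) :
  (mu setT < +oo)%E -> continuous f -> (forall x, 0 <= f x <= 1) ->
  (forall x, (x <= a)%O -> f x = 1) -> (forall x, ~ (x <= b)%O -> f x = 0) ->
  Pm mu a <= Rintegral mu setT f <= Pm mu b.
Proof.
move=> muT cf f01 fa fb.
have mf := cont_mB cf.
have mfE : measurable_fun [set: Borel k0] (fun x : Borel k0 => (f x)%:E).
  exact/measurable_EFinP.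
have mLa : measurable ([set s : Borel k0 | ((s : K) <= a)%O]) by apply: closed_mB; exact: closed_le.
have mLb : measurable ([set s : Borel k0 | ((s : K) <= b)%O]) by apply: closed_mB; exact: closed_le.
have fin (A : set (Borel k0)) : measurable A -> mu A \is a fin_num.
  move=> mA; rewrite ge0_fin_numE ?measure_ge0//.
  by apply: le_lt_trans muT; apply: le_measure => //; rewrite inE.
have h1 : (mu [set s : Borel k0 | ((s : K) <= a)%O] <= (\int[mu]_(x in setT) (f x)%:E)%E)%E.
  have -> : mu [set s : Borel k0 | ((s : K) <= a)%O] = (\int[mu]_(x in setT) (\1_[set s : Borel k0 | ((s : K) <= a)%O] x)%:E)%E.
    by rewrite integral_indic// setIT.
  apply: ge0_le_integral => //.
  - by apply/measurable_EFinP; exact: measurable_indic.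
  - move=> x _; rewrite lee_fin /indic; have [xa|xa] := boolP (x \in _).
      by rewrite fa //; move: xa; rewrite inE.
    by case/andP: (f01 x).
have h2 : ((\int[mu]_(x in setT) (f x)%:E)%E <= mu [set s : Borel k0 | ((s : K) <= b)%O])%E.
  have -> : mu [set s : Borel k0 | ((s : K) <= b)%O] = (\int[mu]_(x in setT) (\1_[set s : Borel k0 | ((s : K) <= b)%O] x)%:E)%E.
    by rewrite integral_indic// setIT.
  apply: ge0_le_integral => //.
  - by move=> x _; rewrite lee_fin; case/andP: (f01 x).
  - by apply/measurable_EFinP; exact: measurable_indic.
  - move=> x _; rewrite lee_fin /indic; have [xb|xb] := boolP (x \in _).
      by case/andP: (f01 x).
    rewrite fb //; move: xb; rewrite notin_setE; exact.
have fi : (\int[mu]_(x in setT) (f x)%:E)%E \is a fin_num.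
  rewrite ge0_fin_numE; last by apply: integral_ge0 => x _; rewrite lee_fin; case/andP: (f01 x).
  by apply: le_lt_trans h2 _; rewrite -ge0_fin_numE ?measure_ge0 ?fin.
rewrite /Pm /Rintegral; apply/andP; split; apply: fine_le => //; exact: fin.
Qed.

Definition Ury (u v : K) : K -> R := Urysohn [set x : K | (v <= x)%O] [set x : K | (x <= u)%O].

Lemma Ury_cont u v : continuous (Ury u v).
Proof. exact: Urysohn_continuous. Qed.

Lemma Ury_props u v : compact_line K -> (u < v)%O ->
  [/\ forall x, 0 <= Ury u v x <= 1,
      forall x, (x <= u)%O -> Ury u v x = 1 &
      forall x, ~ (x <= v)%O -> Ury u v x = 0].
Proof.
move=> cK uv.
have nK : normal_space K := compact_normal order_hausdorff cK.
have sep : uniform_separator [set x : K | (v <= x)%O] [set x : K | (x <= u)%O].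
  apply: normal_uniform_separator => //; [exact: closed_ge | exact: closed_le |].
  apply/seteqP; split => x //= [vx xu].
  by have := lt_le_trans uv (le_trans vx xu); rewrite ltxx.
split.
- move=> x; have := @Urysohn_range K R [set x : K | (v <= x)%O] [set x : K | (x <= u)%O] (Ury u v x).
  by move=> /(_ (ex_intro2 _ _ x I erefl)); rewrite /= in_itv.
- move=> x xu; apply: (@Urysohn_sub1 K R _ _ sep); by exists x.
- move=> x xv; apply: (@Urysohn_sub0 K R _ _ sep); exists x => //=.
  by rewrite /= leNgt; apply/negP => /ltW.
Qed.

Lemma closed_min (C : set K) : compact_line K -> closed C -> C !=set0 ->
  exists2 m, C m & forall c, C c -> (m <= c)%O.
Proof.
move=> cK clC [c0 Cc0].
pose B := fun a : K => C `&` [set x : K | (x <= a)%O].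
have FF : Filter (filter_from C B).
  apply: filter_from_filter; first by exists c0.
  move=> i j Ci Cj; exists (Order.min i j).
    by rewrite /Order.min; case: ifP.
  move=> x; rewrite /B => -[Cx] /= xk.
  have : (x <= Order.min i j)%O := xk.
  rewrite le_min => /andP[xi xj].
  by split; split.
have PF : ProperFilter (filter_from C B).
  by apply: (filter_from_proper FF) => i Ci; exists i; split => //=.
have [p [_ clp]] := cK _ PF (filterT).
exists p.
  have : closure (B c0) p.
    move=> U nU; apply: clp => //; by exists c0.
  by move/(closedI clC (closed_le c0)) => [].
move=> c Cc.
have : closure (B c) p.
  move=> U nU; apply: clp => //; by exists c.
by move/(closedI clC (closed_le c)) => [].
Qed.

Lemma open_itv (a b : K) : open [set x : K | (a < x < b)%O].
Proof.
have -> : [set x : K | (a < x < b)%O] = `]a, b[%classic by apply/seteqP; split => x; rewrite /= in_itv.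
exact: itv_open.
Qed.

Lemma dense_right (H D : set K) (t s : K) : compact_line K -> closed H ->
  D `<=` H -> H `<=` closure D -> H t -> ~ right_isolated H t -> (t < s)%O ->
  exists2 x, D x & (t < x < s)%O.
Proof.
move=> cK clH DH HD Ht nri ts.
have nmax : ~ (forall s', H s' -> (s' <= t)%O) by move=> hm; apply: nri; split => //; left.
have nsucc : ~ (exists s', [/\ H s', (t < s')%O & forall u, H u -> ~ (t < u < s')%O]).
  by move=> hs; apply: nri; split => //; right.
have [h' [Hh' th' h's]] : exists h', [/\ H h', (t < h')%O & (h' < s)%O].
  apply: contrapT => none.
  have [h Hh th] : exists2 h, H h & (t < h)%O.
    apply: contrapT => nh; apply: nmax => s' Hs'; rewrite leNgt; apply/negP => ts'.
    by apply: nh; exists s'.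
  have clC : closed (H `&` [set x : K | (s <= x)%O]) by apply: closedI => //; exact: closed_ge.
  have hs : (s <= h)%O.
    by rewrite leNgt; apply/negP => hs; apply: none; exists h.
  have [m [Hm sm] mmin] := closed_min (H `&` [set x : K | (s <= x)%O]) cK clC (ex_intro _ h (conj Hh hs)).
  apply: nsucc; exists m; split => //; first exact: lt_le_trans ts sm.
  move=> u Hu /andP[tu um].
  have [us|su] := ltP u s; first by apply: none; exists u.
  by have := mmin u (conj Hu su); rewrite leNgt um.
have [x [Dx /= xts]] : (D `&` [set x : K | (t < x < s)%O]) !=set0.
  apply: (HD _ Hh'); apply: open_nbhs_nbhs; split; first exact: open_itv.
  by rewrite /= th' h's.
by exists x.
Qed.

Fixpoint runmin (e : nat -> K) (n : nat) : K :=
  match n with 0%N => e 0%N | n'.+1 => Order.min (runmin e n') (e n) end.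

Lemma seq_right (D : set K) (t : K) : countable D ->
  (forall s, (t < s)%O -> exists2 x, D x & (t < x < s)%O) -> (exists s, (t < s)%O) ->
  exists u : nat -> K, [/\ forall n, D (u n) /\ (t < u n)%O,
     forall n, (u n.+1 <= u n)%O & forall s, (t < s)%O -> exists n, (u n < s)%O].
Proof.
move=> cD dens [s0 ts0].
pose D' := D `&` [set x : K | (t < x)%O].
have cD' : countable D' by apply: sub_countable cD; apply: subset_card_le => x [].
have [x0 Dx0 /andP[tx0 _]] := dens s0 ts0.
case/pfcard_geP: cD' => [D0|[e]].
  by have : D' x0 := conj Dx0 tx0; rewrite D0.
have eD : forall n, D' (e n) by move=> n; apply: funS.
exists (runmin e); split.
- elim=> [|n IH] /=; first exact: eD.
  rewrite /Order.min; case: ifP => _ //; exact: eD.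
- by move=> n /=; rewrite ge_min lexx.
- move=> s ts; have [x Dx /andP[tx xs]] := dens s ts.
  have [k _ ek] : (e @` setT) x by apply: surj; split.
  exists k; apply: le_lt_trans xs; rewrite -ek.
  by case: k {ek} => [|k] //=; rewrite ge_min lexx orbT.
Qed.

Lemma Pm_mono (mu : {measure set (Borel k0) -> \bar R}) (a b : K) :
  (mu setT < +oo)%E -> (a <= b)%O -> Pm mu a <= Pm mu b.
Proof.
move=> muT ab.
have fin (A : set (Borel k0)) : measurable A -> mu A \is a fin_num.
  move=> mA; rewrite ge0_fin_numE ?measure_ge0//.
  by apply: le_lt_trans muT; apply: le_measure => //; rewrite inE.
have mL (c : K) : measurable ([set s : Borel k0 | ((s : K) <= c)%O]) by apply: closed_mB; exact: closed_le.
apply: fine_le; rewrite ?fin//; apply: le_measure; rewrite ?inE//.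
by move=> x /= xa; exact: le_trans xa ab.
Qed.

Lemma Pm_right (mu : {measure set (Borel k0) -> \bar R}) (t : K) (u : nat -> K) :
  (mu setT < +oo)%E -> (forall n, (t < u n)%O) -> (forall n, (u n.+1 <= u n)%O) ->
  (forall s, (t < s)%O -> exists n, (u n < s)%O) ->
  forall eta, 0 < eta -> exists N, forall n, (N <= n)%N -> Pm mu (u n) - Pm mu t <= eta.
Proof.
move=> muT tu unc uconv eta eta0.
have fin (A : set (Borel k0)) : measurable A -> mu A \is a fin_num.
  move=> mA; rewrite ge0_fin_numE ?measure_ge0//.
  by apply: le_lt_trans muT; apply: le_measure => //; rewrite inE.
have mL (c : K) : measurable ([set s : Borel k0 | ((s : K) <= c)%O]) by apply: closed_mB; exact: closed_le.
pose F := fun n => [set s : Borel k0 | ((s : K) <= u n)%O].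
have capE : \bigcap_n F n = [set s : Borel k0 | ((s : K) <= t)%O].
  apply/seteqP; split => x /=.
    move=> Fx; rewrite leNgt; apply/negP => tx.
    have [n unx] := uconv _ tx.
    by have := Fx n I; rewrite /F /= leNgt unx.
  by move=> xt n _; rewrite /F /=; apply: le_trans xt (ltW (tu n)).
have cv : (mu \o F) x @[x --> \oo] --> mu (\bigcap_n F n).
  have unc' : forall n m, (n <= m)%N -> (u m <= u n)%O.
    move=> n m /subnKC <-; elim: (m - n)%N => [|k IH]; first by rewrite addn0.
    by rewrite addnS; apply: le_trans (unc _) IH.
  apply: nonincreasing_cvg_mu.
  - by rewrite -ge0_fin_numE ?measure_ge0//; exact: fin (mL _).
  - by move=> i; exact: mL.
  - by rewrite capE.
  - move=> n m nm; apply/subsetPset => x; rewrite /F /= => xu.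
    exact: le_trans xu (unc' _ _ nm).
rewrite capE -(fineK (fin _ (mL t))) in cv.
have cv2 : (fine \o (mu \o F)) x @[x --> \oo] --> fine (mu [set s : Borel k0 | ((s : K) <= t)%O]) by apply: fine_cvg.
move: cv2; move/cvgrPdist_le => /(_ eta eta0) [N _ HN].
exists N => n Nn; have := HN n Nn; rewrite /= distrC => h.
by apply: le_trans (ler_norm _) h.
Qed.

Variables (I : Type) (mup mun : I -> {measure set (Borel k0) -> \bar R}).

Definition I0 (D : set K) : set I := [set i | exists u v, [/\ D u, D v, (u < v)%O &
  int_signed (mup i) (mun i) (Ury u v) != 0]].

Lemma inv_small {x : R} : x != 0 -> exists m : nat, m.+1%:R^-1 <= `|x|.
Proof.
move=> x0; have xp : 0 < `|x| by rewrite normr_gt0.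
have [k hk] := @ltr_add_invr R 0 `|x| xp.
by exists k; rewrite add0r in hk; exact: ltW.
Qed.

Lemma I0_countable (D : set K) : weak_star_null mup mun -> countable D -> countable (I0 D).
Proof.
move=> wsn cD.
have sub : I0 D `<=` \bigcup_(p in D `*` D) \bigcup_(m in [set: nat])
    [set i | m.+1%:R^-1 <= `|int_signed (mup i) (mun i) (Ury p.1 p.2)|].
  move=> i [u [v [Du Dv uv nz]]].
  have [m hm] := inv_small nz.
  by exists (u, v) => //; exists m.
apply: (sub_countable (subset_card_le sub)).
apply: bigcup_countable; first exact: countableX.
move=> p _; apply: bigcup_countable => // m _.
apply: finite_set_countable; apply: wsn; first exact: Ury_cont.
by rewrite invr_gt0 ltr0n.
Qed.

Lemma key_zero (D : set K) (t : K) (i : I) : compact_line K ->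
  (mup i setT < +oo)%E -> (mun i setT < +oo)%E -> countable D ->
  (forall s, (t < s)%O -> exists2 x, D x & (t < x < s)%O) -> (exists s, (t < s)%O) ->
  ~ I0 D i -> Fmu (mup i) (mun i) t = 0.
Proof.
move=> cK fp fn cD dens [s0 ts0] ni.
have [u [uD unc uconv]] := seq_right D t cD dens (ex_intro _ s0 ts0).
have tu n : (t < u n)%O by case: (uD n).
have bnd eta : 0 < eta -> `|Fmu (mup i) (mun i) t| <= eta.
  move=> eta0.
  have [N1 h1] := Pm_right (mup i) t u fp tu unc uconv eta eta0.
  have [N2 h2] := Pm_right (mun i) t u fn tu unc uconv eta eta0.
  pose v := u (maxn N1 N2).
  have {h1}h1 := h1 _ (leq_maxl N1 N2).
  have {h2}h2 := h2 _ (leq_maxr N1 N2).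
  have [x Dx /andP[tx xv]] := dens v (tu _).
  have [f01 f1 f0] := Ury_props x v cK xv.
  have ft : forall y, (y <= t)%O -> Ury x v y = 1.
    by move=> y yt; apply: f1; exact: le_trans yt (ltW tx).
  have /andP[b1 b2] := int_bounds (mup i) (Ury x v) t v fp (Ury_cont x v) f01 ft f0.
  have /andP[b3 b4] := int_bounds (mun i) (Ury x v) t v fn (Ury_cont x v) f01 ft f0.
  have z : int_signed (mup i) (mun i) (Ury x v) = 0.
    apply/eqP; apply: contrapT => nz; apply: ni.
    by exists x, v; split => //; [exact: (uD _).1 | exact/negP].
  move: z h1 h2 b1 b2 b3 b4; rewrite /int_signed /Fmu -/(Pm (mup i) t) -/(Pm (mun i) t).
  rewrite /v; set A := Pm (mup i) _; set B := Pm (mun i) _.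
  set C := Rintegral _ _ _; set E := Rintegral _ _ _.
  set P := Pm (mup i) t; set Q := Pm (mun i) t.
  move=> z h1 h2 b1 b2 b3 b4.
  rewrite ler_norml; apply/andP; split; lra.
apply/eqP; apply: contrapT => /negP nz.
have := bnd (`|Fmu (mup i) (mun i) t| / 2).
rewrite divr_gt0 ?normr_gt0 // => /(_ isT).
set z := `|_|; have : 0 < z by rewrite normr_gt0.
lra.
Qed.

Lemma finite_big (T : choiceType) (Q : set T) (g : T -> R) (M c : R) : 0 < c ->
  (\esum_(t in Q) (`|g t|)%:E <= M%:E)%E -> finite_set [set t | Q t /\ c <= `|g t|].
Proof.
move=> c0 hM; apply: contrapT => inf.
pose n := Num.Def.archi_bound (`|M| / c).
have hn : `|M| / c < n%:R by apply: archi_boundP; rewrite divr_ge0 // ltW.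
have [B BS Bn] := infinite_set_fset n inf.
have : (((size (finmap.enum_fset B))%:R * c)%:E <= \esum_(t in Q) (`|g t|)%:E)%E.
  apply: esum_ge; exists [set` B].
    by split; [exact: finite_fset | by move=> x /BS []].
  rewrite fsbig_finite ?finite_fset // set_fsetK sumEFin lee_fin.
  rewrite mulr_natl -iter_addr_0.
  have -> : #|` B| = count predT B by rewrite count_predT.
  rewrite -(big_const_seq 0 +%R B predT).
  rewrite [X in X <= _]big_seq [X in _ <= X]big_seq; apply: ler_sum => x xB.
  by have [] := BS x xB.
move=> h; have := le_trans h hM; rewrite lee_fin => h2.
have : `|M| < (size (finmap.enum_fset B))%:R * c.
  rewrite -ltr_pdivrMr //; apply: lt_le_trans hn _; by rewrite ler_nat.
have := ler_norm M; lra.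
Qed.

Lemma countableU2 (T : Type) (A B : set T) : countable A -> countable B -> countable (A `|` B).
Proof.
move=> cA cB.
have -> : A `|` B = \bigcup_(j in [set: bool]) (if j then A else B).
  apply/seteqP; split => x.
    by case=> h; [exists true | exists false].
  by case=> -[] _ h; [left | right].
by apply: bigcup_countable => // -[].
Qed.

Lemma not_ri_above (H : set K) (t : K) : H t -> ~ right_isolated H t ->
  exists2 h, H h & (t < h)%O.
Proof.
move=> Ht nri; apply: contrapT => nh; apply: nri; split => //; left.
move=> s' Hs'; rewrite leNgt; apply/negP => ts'; by apply: nh; exists s'.
Qed.

Lemma step_cont (t s : K) : (t < s)%O -> (forall u, ~ (t < u < s)%O) ->
  continuous (fun x : K => if (x <= t)%O then (1 : R) else 0).
Proof.
move=> ts gap; apply/continuousP => A oA.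
have E1 : [set x : K | (x <= t)%O] = [set x : K | (x < s)%O].
  apply/seteqP; split => x /=.
    by move=> xt; exact: le_lt_trans xt ts.
  move=> xs; rewrite leNgt; apply/negP => tx; apply: (gap x); by rewrite tx xs.
have E2 : [set x : K | ~ (x <= t)%O] = [set x : K | (t < x)%O].
  by apply/seteqP; split => x /=; rewrite ltNge; [move/negP | move/negP].
have [A1|A1] := pselect (A 1); have [A0|A0] := pselect (A 0).
- have -> : (fun x : K => if (x <= t)%O then (1 : R) else 0) @^-1` A = setT.
    by apply/seteqP; split => x //= _; case: ifP.
  exact: openT.
- have -> : (fun x : K => if (x <= t)%O then (1 : R) else 0) @^-1` A = [set x : K | (x < s)%O].
    rewrite -E1; apply/seteqP; split => x /=; case: ifP => //.
  exact: open_gt.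
- have -> : (fun x : K => if (x <= t)%O then (1 : R) else 0) @^-1` A = [set x : K | (t < x)%O].
    rewrite -E2; apply/seteqP; split => x /=; case: ifP => //.
  exact: open_lt.
- have -> : (fun x : K => if (x <= t)%O then (1 : R) else 0) @^-1` A = set0.
    by apply/seteqP; split => x //=; case: ifP.
  exact: open0.
Qed.

Lemma part1 (F : I -> K -> R) (Q : set K) (a b : I -> K -> R) (M : R) :
  compact_line K ->
  (forall i, (mup i setT < +oo)%E /\ (mun i setT < +oo)%E) ->
  (forall i t, F i t = Fmu (mup i) (mun i) t) ->
  weak_star_null mup mun ->
  (forall i t, Q t -> F i t = a i t + b i t) ->
  (forall t, Q t -> c0fam (fun i => a i t)) ->
  (forall i, (\esum_(t in Q) (`|b i t|)%:E <= M%:E)%E) ->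
  forall H : set K, closed H -> separable_set H ->
     countable [set t | [/\ Q t, H t, ~ right_isolated H t & ~ c0fam (fun i => F i t)]].
Proof.
move=> cK fin Feq wsn Fab ac0 bM H clH [D [DH cD HD]].
have sub : [set t | [/\ Q t, H t, ~ right_isolated H t & ~ c0fam (fun i => F i t)]] `<=`
    \bigcup_(i in I0 D) \bigcup_(m in [set: nat]) [set t | Q t /\ m.+1%:R^-1 <= `|b i t|].
  move=> t [Qt Ht nri nc0].
  have [e [e0 infe]] : exists e : R, 0 < e /\ infinite_set [set i | e <= `|F i t|].
    apply: contrapT => hn; apply: nc0 => e e0; apply: contrapT => inf.
    by apply: hn; exists e.
  have e20 : 0 < e / 2 by rewrite divr_gt0.
  have fa := ac0 t Qt _ e20.
  have [i [Fi nai]] := infinite_setN0 (infinite_setD infe fa).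
  rewrite /= in Fi nai.
  have bi : e / 2 <= `|b i t|.
    have h := Fab i t Qt.
    have tri : `|F i t| <= `|a i t| + `|b i t| by rewrite h; exact: ler_normD.
    have : `|a i t| < e / 2 by rewrite ltNge; apply/negP.
    lra.
  have iI0 : I0 D i.
    apply: contrapT => ni.
    have [h Hh th] := not_ri_above H t Ht nri.
    have := key_zero D t i cK (fin i).1 (fin i).2 cD
      (fun s ts => dense_right H D t s cK clH DH HD Ht nri ts) (ex_intro _ h th) ni.
    rewrite -Feq => F0; move: Fi; rewrite F0 normr0; lra.
  have [m hm] := @inv_small (e / 2) (lt0r_neq0 e20).
  exists i => //; exists m => //; split => //.
  by apply: le_trans hm _; rewrite ger0_norm ?(ltW e20).
apply: (sub_countable (subset_card_le sub)).
apply: bigcup_countable; first exact: I0_countable.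
move=> i _; apply: bigcup_countable => // m _.
apply: finite_set_countable; apply: (finite_big _ _ _ M).
  by rewrite invr_gt0 ltr0n.
exact: bM.
Qed.

Lemma part2 (F : I -> K -> R) (Q : set K) (a b : I -> K -> R) (M : R) :
  compact_line K ->
  (forall i, (mup i setT < +oo)%E /\ (mun i setT < +oo)%E) ->
  (forall i t, F i t = Fmu (mup i) (mun i) t) ->
  weak_star_null mup mun ->
  (forall i t, Q t -> F i t = a i t + b i t) ->
  (forall t, Q t -> c0fam (fun i => a i t)) ->
  (forall i, (\esum_(t in Q) (`|b i t|)%:E <= M%:E)%E) ->
  forall H : set K, closed H -> separable_set H -> order_convex H ->
     countable [set t | [/\ Q t, H t & ~ c0fam (fun i => F i t)]].
Proof.
move=> cK fin Feq wsn Fab ac0 bM H clH sH cvH.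
have c1 := part1 F Q a b M cK fin Feq wsn Fab ac0 bM H clH sH.
pose Mx := [set t : K | H t /\ forall s, H s -> (s <= t)%O].
have cMx : countable Mx.
  have [[t0 Mt0]|/set0P/negP/negPn/eqP ->] := pselect (Mx !=set0); last exact: countable0.
  have s0 : Mx `<=` [set t0].
    by move=> t [Ht tmax] /=; apply/eqP; rewrite eq_le (Mt0.2 t Ht) (tmax t0 Mt0.1).
  exact: (sub_countable (subset_card_le s0) (countable1 t0)).
suff sS : [set t | [/\ Q t, H t & ~ c0fam (fun i => F i t)]] `<=`
    [set t | [/\ Q t, H t, ~ right_isolated H t & ~ c0fam (fun i => F i t)]] `|` Mx.
  apply: (sub_countable (subset_card_le sS)).
  apply: countableU2 c1 cMx.
move=> t [Qt Ht nc0].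
have [ri|nri] := pselect (right_isolated H t); last by left.
case: ri => _ [tmax|[s [Hs ts gapH]]]; first by right.
exfalso.
have gap : forall u, ~ (t < u < s)%O.
  move=> u /andP[tu us]; apply: (gapH u); last by rewrite tu us.
  by apply: (cvH t s u Ht Hs); rewrite (ltW tu) (ltW us).
pose g := fun x : K => if (x <= t)%O then (1 : R) else 0.
have cg : continuous g := step_cont t s ts gap.
have g01 : forall x, 0 <= g x <= 1 by move=> x; rewrite /g; case: ifP => _; rewrite ?lexx ?ler01.
have g1 : forall x, (x <= t)%O -> g x = 1 by move=> x xt; rewrite /g xt.
have g0 : forall x, ~ (x <= t)%O -> g x = 0 by move=> x /negP/negbTE xt; rewrite /g xt.
apply: nc0.
have -> : (fun i => F i t) = (fun i => int_signed (mup i) (mun i) g).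
  apply: funext => i; rewrite Feq /int_signed /Fmu.
  have /andP[p1 p2] := int_bounds (mup i) g t t (fin i).1 cg g01 g1 g0.
  have /andP[n1 n2] := int_bounds (mun i) g t t (fin i).2 cg g01 g1 g0.
  move: p1 p2 n1 n2; rewrite /Pm; lra.
exact: wsn.
Qed.
End L.

Theorem theorem3p2 (d : Order.disp_t) (K : orderTopologicalType d) (k0 : K)
  (R : realType) (I : Type) (mup mun : I -> {measure set (Borel k0) -> \bar R})
  (F : I -> K -> R) (Q : set K) :
  compact_line K ->
  (forall i, finite_radon (mup i) /\ finite_radon (mun i)) ->
  (forall i t, F i t = Fmu (mup i) (mun i) t) ->
  weak_star_null mup mun ->
  type_c0l1 F Q ->
  (forall H : set K, closed H -> separable_set H ->
     countable [set t | [/\ Q t, H t, ~ right_isolated H t & ~ c0fam (fun i => F i t)]])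
  /\
  (forall H : set K, closed H -> separable_set H -> order_convex H ->
     countable [set t | [/\ Q t, H t & ~ c0fam (fun i => F i t)]]).
Proof.
move=> cK frad Feq wsn [a [b [Fab ac0 [M bM]]]].
have fin : forall i, (mup i setT < +oo)%E /\ (mun i setT < +oo)%E.
  by move=> i; split; [exact: (frad i).1.1 | exact: (frad i).2.1].
split.
- exact: (part1 K k0 R I mup mun F Q a b M cK fin Feq wsn Fab ac0 bM).
- exact: (part2 K k0 R I mup mun F Q a b M cK fin Feq wsn Fab ac0 bM).
Qed.
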